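(* Let $r\ge1$ and $\mu>0$. The holomorphic map $f:M_{\Delta^r}(\mu)\to\ell^2(\mathbb C)$, $f(z,w)=(\psi_1,\dots,\psi_r,\Psi)$, where for $j=1,\dots,r$ $$\psi_j=\sqrt\mu\left(z_j,\frac{z_j^2}{\sqrt2},\dots,\frac{z_j^k}{\sqrt k},\dots\right),$$ and $\Psi$ has components indexed by $k=(k_1,\dots,k_r)\in\mathbb Z_{\ge0}^r$ and $a\in\mathbb Z_{\ge1}$ given by $$\frac1{\sqrt a}\sqrt{\binom{\mu a+k_1-1}{k_1}\cdots\binom{\mu a+k_r-1}{k_r}}\;z_1^{k_1}\cdots z_r^{k_r}w^a,$$ satisfies $\sum_j|f_j(z,w)|^2=-\log\left(\prod_{j=1}^r(1-|z_j|^2)^\mu-|w|^2\right)$; in particular $f^*\omega_0=\omega_{\Delta^r}(\mu)$.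
   Context: $M_{\Delta^r}(\mu)=\{(z,w)\in\Delta^r\times\mathbb C:|w|^2<\prod_{j=1}^r(1-|z_j|^2)^\mu\}$ with Kähler metric $\omega_{\Delta^r}(\mu)=\frac i2\partial\bar\partial\left(-\log\left(\prod_{j}(1-|z_j|^2)^\mu-|w|^2\right)\right)$. $\ell^2(\mathbb C)$ is the Hilbert space of square-summable complex sequences with flat Kähler form $\omega_0=\frac i2\partial\bar\partial\sum_j|x_j|^2$. Binomial coefficients with non-integer top entry are generalized: $\binom{x}{k}=x(x-1)\cdots(x-k+1)/k!$. *)

(* Defs.v *)
From HB Require Import structures.
From mathcomp Require Import all_boot all_order all_algebra.
From mathcomp Require Import all_classical all_reals.
From mathcomp Require Import ereal esum exp.
From mathcomp Require Import complex.
Set Implicit Arguments. Unset Strict Implicit. Unset Printing Implicit Defensive.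
Import Order.TTheory GRing.Theory Num.Theory.
Local Open Scope ring_scope.
Local Open Scope complex_scope.

Definition cabs2 (R : rcfType) (z : R[i]) : R := complex.Re z ^+ 2 + complex.Im z ^+ 2.

Definition gbinom (R : fieldType) (x : R) (k : nat) : R :=
  (\prod_(i < k) (x - i%:R)) / (k`!)%:R.

Definition in_M (R : realType) (r : nat) (mu : R) (z : 'I_r -> R[i]) (w : R[i]) :=
  (forall j, cabs2 (z j) < 1) /\
  cabs2 w < \prod_(j < r) (1 - cabs2 (z j)) `^ mu.

(* Index set of the components of f:
   inl (j, m)  : the m-th component (m = 0,1,... corresponds to k = m+1) of psi_j;
   inr (k, b)  : the component of Psi indexed by k in Z_{>=0}^r and a = b+1. *)
Definition fidx (r : nat) : Type := ('I_r * nat) + ({ffun 'I_r -> nat} * nat).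

Definition f_emb (R : realType) (r : nat) (mu : R) (z : 'I_r -> R[i]) (w : R[i])
    (i : fidx r) : R[i] :=
  match i with
  | inl (j, m) =>
      (Num.sqrt mu / Num.sqrt (m.+1)%:R)%:C * z j ^+ m.+1
  | inr (k, b) =>
      let a := b.+1 in
      ((Num.sqrt (a%:R))^-1 *
        Num.sqrt (\prod_(j < r) gbinom (mu * a%:R + (k j)%:R - 1) (k j)))%:C
      * (\prod_(j < r) z j ^+ k j) * w ^+ a
  end.

(* Main.v *)
Require Import Defs.
From HB Require Import structures.
From mathcomp Require Import all_boot all_order all_algebra.
From mathcomp Require Import all_classical all_reals.
From mathcomp Require Import ereal esum exp.
From mathcomp Require Import complex.
Import Order.TTheory GRing.Theory Num.Theory.
Local Open Scope ring_scope.

From mathcomp Require Import topology normedtype sequences derive realfun.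
From mathcomp Require Import ring lra.
From mathcomp Require finmap.

Module Helpers.
Import numFieldNormedType.Exports.
Local Open Scope classical_set_scope.
Local Open Scope ring_scope.
Section A1.
Variable R : realType.

Lemma ratio_cvg (u : R^nat) (K a : R) : (forall n, 0 <= u n) -> 0 <= K -> K < 1 ->
  0 <= a -> (forall n, (1 <= n)%N -> n.+1%:R * u n.+1 <= K * (a + n%:R) * u n) ->
  cvgn (series u).
Proof.
move=> u0 K0 K1 a0 H.
pose q := (1 + K) / 2.
have q0 : 0 < q by rewrite /q; lra.
have q1 : q < 1 by rewrite /q; lra.
have qK : 0 < q - K by rewrite /q; lra.
pose N := (Num.Def.archi_bound (K * a / (q - K))).+1.
have hN : K * a / (q - K) < N%:R.
  have h0 : 0 <= K * a / (q - K) by apply: divr_ge0; [apply: mulr_ge0|apply: ltW].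
  apply: lt_le_trans (archi_boundP h0) _.
  by rewrite ler_nat.
have step n : (N <= n)%N -> u n.+1 <= q * u n.
  move=> Nn.
  have n1 : (1 <= n)%N by apply: leq_trans Nn.
  have := H n n1.
  have hn : K * a <= (q - K) * n%:R.
    rewrite -ler_pdivrMl //; rewrite mulrC; apply: ltW; apply: lt_le_trans hN _.
    by rewrite ler_nat.
  have npos : 0 < n.+1%:R :> R by rewrite ltr0n.
  move=> Hn.
  have : n.+1%:R * u n.+1 <= n.+1%:R * (q * u n).
    apply: le_trans Hn _.
    have h2 : K * (a + n%:R) <= n.+1%:R * q.
      rewrite -addn1 natrD; nra.
    rewrite mulrA; apply: ler_wpM2r => //.
  by rewrite ler_pM2l.
pose S := \sum_(i < N.+1) u i.
have uS n : (n <= N)%N -> u n <= S.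
  move=> nN; rewrite /S (bigD1 (Ordinal (n:=N.+1) (m:=n) (nN : (n < N.+1)%N))) //=.
  by rewrite lerDl sumr_ge0.
have gen k : u (N + k)%N <= q ^+ k * u N.
  elim: k => [|k IH]; first by rewrite addn0 expr0 mul1r.
  rewrite addnS exprS -mulrA; apply: le_trans (step _ (leq_addr _ _)) _.
  by rewrite ler_wpM2l // ltW.
pose C := S / q ^+ N.
have qN0 : 0 < q ^+ N by rewrite exprn_gt0.
apply: (@series_le_cvg _ _ (fun n => C * q ^+ n)) => //.
- move=> n; apply: mulr_ge0; last by rewrite exprn_ge0 // ltW.
  by apply: divr_ge0; [apply: sumr_ge0|apply: ltW].
- move=> n; case: (leqP n N) => nN.
    apply: le_trans (uS _ nN) _.
    rewrite /C mulrAC ler_pdivlMr // ler_wpM2l ?sumr_ge0 //.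
    by rewrite ler_wiXn2l // ?ltW.
  have -> : n = (N + (n - N))%N by rewrite subnKC // ltnW.
  apply: le_trans (gen _) _.
  rewrite /C exprD [q ^+ N * _]mulrC mulrCA divfK ?gt_eqF //.
  by apply: ler_wpM2l; [exact: exprn_ge0 (ltW q0)| exact: uS].
- have := @is_cvg_geometric_series R C q; apply.
  by rewrite ger0_norm ?ltW.
Qed.
End A1.
Section A2.
Variable R : realType.

Lemma esum_series (u : R^nat) : (forall n, 0 <= u n) -> cvgn (series u) ->
  (\esum_(i in [set: nat]%classic) (u i)%:E)%E = (limn (series u))%:E.
Proof.
move=> u0 cu; rewrite -nneseries_esumT; last by move=> n; rewrite lee_fin.
rewrite -EFin_lim //; congr (limn _); apply/funext => n /=.
by rewrite sumEFin.
Qed.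

Lemma pseries0 (c : R^nat) : limn (pseries c 0) = c 0.
Proof.
apply/cvg_lim => //; apply: cvg_near_cst; near=> n.
rewrite /pseries /series /=.
have nn : (0 < n)%N by near: n; exists 1%N.
rewrite big_ltn // expr0 mulr1 big_nat_cond big1 ?addr0 // => i /andP[/andP[i1 _] _].
by rewrite expr0n gtn_eqF // mulr0.
Unshelve. all: by end_near.
Qed.

Lemma pseries_derive (c : R^nat) :
  (forall K, 0 < K < 1 -> cvgn (pseries c K)) ->
  (forall K, 0 < K < 1 -> cvgn (pseries (pseries_diffs c) K)) ->
  (forall K, 0 < K < 1 -> cvgn (pseries (pseries_diffs (pseries_diffs c)) K)) ->
  forall x : R, 0 <= x < 1 ->
  is_derive x (1 : R) (fun x => limn (pseries c x)) (limn (pseries (pseries_diffs c) x)).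
Proof.
move=> h1 h2 h3 x /andP[x0 x1].
have hK : 0 < (1 + x) / 2 < 1 by apply/andP; split; lra.
apply: (pseries_snd_diffs (h1 _ hK) (h2 _ hK) (h3 _ hK)).
rewrite !ger0_norm //; [lra | lra].
Qed.

Lemma deriv0_cst (f : R -> R) :
  (forall x : R, 0 <= x < 1 -> is_derive x (1:R) f 0) ->
  forall t : R, 0 <= t < 1 -> f t = f 0.
Proof.
move=> hd t /andP[t0 t1].
have [||c _ ] := @MVT_segment R f (fun _ => 0) 0 t t0.
- move=> y; rewrite in_itv /= => /andP[y0 yt]; apply: hd; apply/andP; split; lra.
- apply: continuous_in_subspaceT => y; rewrite inE /= in_itv /= => /andP[y0 yt].
  have [dy _] := hd y (ltac:(apply/andP; split; lra)).
  exact/differentiable_continuous/derivable1_diffP.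
- by rewrite mul0r => /eqP; rewrite subr_eq0 => /eqP.
Qed.
End A2.
Section A3.
Variable R : realType.

Lemma series_shift0 (u : R^nat) : u 0%N = 0 -> cvgn (series u) ->
  cvgn (series (fun m => u m.+1)) /\ limn (series (fun m => u m.+1)) = limn (series u).
Proof.
move=> u00 cu.
have E : series (fun m => u m.+1) = (fun n => series u n.+1).
  apply/funext => n; rewrite /series /= big_nat_recl // u00 add0r.
  by apply: eq_bigr.
have cv : series (fun m => u m.+1) @ \oo --> limn (series u).
  by rewrite E cvg_shiftS.
split; first exact: cvgP cv.
exact: cvg_lim cv.
Qed.

Lemma lt01_le (K : R) : 0 < K < 1 -> 0 <= K < 1.
Proof. by case/andP=> h1 h2; rewrite ltW. Qed.

Definition lc (i : nat) : R := (i%:R)^-1.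

Lemma lc_diffs : pseries_diffs lc = fun _ => 1.
Proof.
by apply/funext => i; rewrite /pseries_diffs /lc mulfV // pnatr_eq0.
Qed.

Lemma lc_cvg1 K : 0 <= K < 1 -> cvgn (pseries lc K).
Proof.
move=> /andP[K0 K1].
apply: (@series_le_cvg _ _ (geometric 1 K)).
- by move=> n; rewrite mulr_ge0 ?exprn_ge0 // /lc invr_ge0.
- by move=> n; rewrite /geometric /= mul1r exprn_ge0.
- move=> n; rewrite /geometric /= mul1r ler_piMl ?exprn_ge0 //.
  case: n => [|n]; first by rewrite /lc invr0.
  by rewrite /lc invf_le1 ?ltr0n // ler1n.
- by apply: is_cvg_geometric_series; rewrite ger0_norm.
Qed.

Lemma lc_cvg2 K : 0 <= K < 1 -> cvgn (pseries (pseries_diffs lc) K).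
Proof.
move=> /andP[K0 K1]; rewrite lc_diffs.
by apply: (@is_cvg_geometric_series R 1 K); rewrite ger0_norm.
Qed.

Lemma lc_cvg3 K : 0 <= K < 1 -> cvgn (pseries (pseries_diffs (pseries_diffs lc)) K).
Proof.
move=> /andP[K0 K1]; rewrite lc_diffs.
apply: (@ratio_cvg _ _ K 2) => //.
- by move=> n; rewrite /pseries_diffs mulr_ge0 ?exprn_ge0 // mulr_ge0.
- move=> n _; rewrite /pseries_diffs /= exprS.
  have e1 : (n.+2%:R : R) = n%:R + 2 by rewrite -addn2 natrD.
  have e2 : (n.+1%:R : R) = n%:R + 1 by rewrite -addn1 natrD.
  rewrite e1 e2 le_eqVlt; apply/orP; left; apply/eqP; ring.
Qed.

Lemma log_series (t : R) : 0 <= t < 1 ->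
  cvgn (pseries lc t) /\ limn (pseries lc t) = - ln (1 - t).
Proof.
move=> /andP[t0 t1]; split; first by apply: lc_cvg1; rewrite t0.
pose F := fun x => limn (pseries lc x).
pose g := F + ((@ln R) \o (fun y : R => 1 - y)).
have hd : forall x : R, 0 <= x < 1 -> is_derive x (1:R) g 0.
  move=> x /andP[x0 x1].
  have dF := @pseries_derive R lc (fun K hK => lc_cvg1 _ (lt01_le _ hK))
       (fun K hK => lc_cvg2 _ (lt01_le _ hK))
       (fun K hK => lc_cvg3 _ (lt01_le _ hK))
       x (ltac:(apply/andP; split; done) : 0 <= x < 1).
  have d1 : is_derive x (1:R) (fun y : R => 1 - y) (-1).
    have -> : (fun y : R => 1 - y) = cst 1 - id by apply/funext.
    by apply: is_derive_eq; rewrite sub0r.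
  have dl : is_derive ((fun y : R => 1 - y) x) (1:R) (@ln R) (1 - x)^-1.
    by apply: is_derive1_ln => /=; rewrite subr_gt0.
  have dc := @is_derive1_comp R (@ln R) (fun y : R => 1 - y) x _ _ dl d1.
  have := is_deriveD dF dc.
  rewrite lc_diffs.
  have -> : limn (pseries (fun=> 1) x) = (1 - x)^-1.
    apply: cvg_lim => //.
    have := @cvg_geometric_series R 1 x; rewrite mul1r; apply.
    by rewrite ger0_norm.
  by move=> h; apply: (is_derive_eq h); rewrite mulrN1 subrr.
have := @deriv0_cst R g hd t (ltac:(apply/andP; split; done) : 0 <= t < 1).
change (F t + ln (1 - t) = F 0 + ln (1 - 0) -> limn (pseries lc t) = - ln (1 - t)).
rewrite /F pseries0 /lc invr0 subr0 ln1 addr0 => /eqP.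
by rewrite addr_eq0 => /eqP.
Qed.
End A3.
Section A4.
Variable R : realType.
Variable s : R.
Hypothesis s0 : 0 < s.

Definition bc (n : nat) : R := gbinom (s + n%:R - 1) n.

Lemma bc0 : bc 0 = 1.
Proof. by rewrite /bc /gbinom big_ord0 fact0 divr1. Qed.

Lemma bc_rec n : bc n.+1 = (s + n%:R) / n.+1%:R * bc n.
Proof.
rewrite /bc /gbinom big_ord_recl factS natrM.
have -> : \prod_(i < n) (s + n.+1%:R - 1 - (lift ord0 i)%:R)
   = \prod_(i < n) (s + n%:R - 1 - i%:R).
  apply: eq_bigr => i _; rewrite /= /bump /= add1n -[n.+1]addn1 -[i.+1]addn1 !natrD.
  ring.
have e : (n.+1%:R : R) = n%:R + 1 by rewrite -addn1 natrD.
rewrite e (_ : ((@ord0 n)%:R : R) = 0) // subr0.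
have h1 : (n%:R + 1 : R) != 0 by rewrite natr1 pnatr_eq0.
have h2 : (n`!%:R : R) != 0 by rewrite pnatr_eq0 -lt0n fact_gt0.
field.
by rewrite h1 h2.
Qed.

Lemma bc_rec' n : n.+1%:R * bc n.+1 = (s + n%:R) * bc n.
Proof.
have h : (n.+1%:R : R) != 0 by rewrite pnatr_eq0.
rewrite bc_rec; field; by rewrite nat1r pnatr_eq0.
Qed.

Lemma bc_ge0 n : 0 <= bc n.
Proof.
elim: n => [|n IH]; first by rewrite bc0.
rewrite bc_rec; apply: mulr_ge0 => //; apply: divr_ge0 => //.
by apply: addr_ge0; [exact: ltW|].
Qed.

Lemma sn_ge0 n : 0 <= s + n%:R.
Proof. by apply: addr_ge0 => //; exact: ltW. Qed.
Lemma sn1_ge0 n : 0 <= s + n%:R + 1.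
Proof. by apply: addr_ge0 => //; exact: sn_ge0. Qed.

Lemma bc_diffs : pseries_diffs bc = fun n => (s + n%:R) * bc n.
Proof. by apply/funext => n; rewrite /pseries_diffs bc_rec'. Qed.

Lemma bc_diffs2 : pseries_diffs (pseries_diffs bc) =
  fun n => (s + n%:R + 1) * ((s + n%:R) * bc n).
Proof.
apply/funext => n; rewrite bc_diffs /pseries_diffs mulrCA bc_rec'.
by rewrite -[n.+1]addn1 natrD addrA.
Qed.

Lemma bc_cvg1 K : 0 <= K < 1 -> cvgn (pseries bc K).
Proof.
move=> /andP[K0 K1].
apply: (@ratio_cvg _ _ K s) => //.
- by move=> n; rewrite mulr_ge0 ?exprn_ge0 ?bc_ge0.
- exact: ltW s0.
- move=> n _ /=; rewrite exprS mulrA bc_rec' le_eqVlt; apply/orP; left.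
  apply/eqP; ring.
Qed.

Lemma bc_cvg2 K : 0 <= K < 1 -> cvgn (pseries (pseries_diffs bc) K).
Proof.
move=> /andP[K0 K1]; rewrite bc_diffs.
apply: (@ratio_cvg _ _ K (s + 1)) => //.
- move=> n /=; apply: mulr_ge0; [apply: mulr_ge0; [exact: sn_ge0|exact: bc_ge0]|exact: exprn_ge0].
- by apply: addr_ge0 => //; exact: ltW.
- move=> n _ /=; rewrite exprS.
  have -> : n.+1%:R * ((s + n.+1%:R) * bc n.+1 * (K * K ^+ n)) =
    (s + n.+1%:R) * (K * K ^+ n) * (n.+1%:R * bc n.+1) by ring.
  rewrite bc_rec' -[n.+1]addn1 natrD le_eqVlt; apply/orP; left.
  apply/eqP; ring.
Qed.

Lemma bc_cvg3 K : 0 <= K < 1 -> cvgn (pseries (pseries_diffs (pseries_diffs bc)) K).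
Proof.
move=> /andP[K0 K1]; rewrite bc_diffs2.
apply: (@ratio_cvg _ _ K (s + 2)) => //.
- move=> n /=; apply: mulr_ge0; [|exact: exprn_ge0].
  apply: mulr_ge0; [exact: sn1_ge0|apply: mulr_ge0; [exact: sn_ge0|exact: bc_ge0]].
- by apply: addr_ge0 => //; exact: ltW.
- move=> n _ /=; rewrite exprS.
  have -> : n.+1%:R * ((s + n.+1%:R + 1) * ((s + n.+1%:R) * bc n.+1) * (K * K ^+ n)) =
    (s + n.+1%:R + 1) * (s + n.+1%:R) * (K * K ^+ n) * (n.+1%:R * bc n.+1) by ring.
  rewrite bc_rec' -[n.+1]addn1 natrD le_eqVlt; apply/orP; left.
  apply/eqP; ring.
Qed.

End A4.
Section A5.
Variable R : realType.
Variable s : R.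
Hypothesis s0 : 0 < s.
Local Notation bc := (@bc R s).
Lemma binom_series (t : R) : 0 <= t < 1 ->
  cvgn (pseries bc t) /\ limn (pseries bc t) = ((1 - t) `^ s)^-1.
Proof.
move=> /andP[t0 t1]; split; first by apply: (@bc_cvg1 R s s0); rewrite t0.
pose G := fun x => limn (pseries bc x).
pose G' := fun x => limn (pseries (pseries_diffs bc) x).
have hG' : forall x : R, 0 <= x < 1 -> G' x = s * G x + x * G' x.
  move=> x /andP[x0 x1].
  have c1 : cvgn (pseries bc x) by apply: (@bc_cvg1 R s s0); rewrite x0.
  have c2 : cvgn (pseries (pseries_diffs bc) x) by apply: (@bc_cvg2 R s s0); rewrite x0.
  have c3 := pseries_diffs_equiv c2.
  have E : pseries (pseries_diffs bc) x = (fun N => s * pseries bc x N +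
        x * series (fun i => i%:R * bc i * x ^+ i.-1) N).
    apply/funext => N; rewrite /pseries /series /= (@bc_diffs R s) mulr_sumr mulr_sumr -big_split /=.
    apply: eq_bigr => i _; case: i => [|i] /=; first by ring.
    rewrite exprS; ring.
  have : pseries (pseries_diffs bc) x @ \oo --> s * G x + x * G' x.
    rewrite E; apply: cvgD; apply: cvgM; (try exact: cvg_cst); [exact: c1|exact: c3].
  by move=> h; rewrite {1}/G' (cvg_lim _ h).
have hd : forall x : R, 0 <= x < 1 ->
    is_derive x (1:R) (((@powR R)^~ s \o (fun y : R => 1 - y)) * G) 0.
  move=> x /andP[x0 x1].
  have dG := @pseries_derive R bc (fun K hK => @bc_cvg1 R s s0 K (@lt01_le R K hK))
       (fun K hK => @bc_cvg2 R s s0 K (@lt01_le R K hK))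
       (fun K hK => @bc_cvg3 R s s0 K (@lt01_le R K hK))
       x (ltac:(apply/andP; split; done) : 0 <= x < 1).
  have d1 : is_derive x (1:R) (fun y : R => 1 - y) (-1).
    have -> : (fun y : R => 1 - y) = cst 1 - id by apply/funext.
    by apply: is_derive_eq; rewrite sub0r.
  have dl : is_derive ((fun y : R => 1 - y) x) (1:R) ((@powR R)^~ s) (s * (1 - x) `^ (s - 1)).
    by apply: is_derive1_powR => /=; rewrite subr_gt0.
  have dc := @is_derive1_comp R ((@powR R)^~ s) (fun y : R => 1 - y) x _ _ dl d1.
  have := is_deriveM dc dG.
  move=> h; apply: (is_derive_eq h).
  have e := hG' x (ltac:(apply/andP; split; done)).
  rewrite /G /G' in e.
  rewrite /= -(mulr_powRB1 (x := 1 - x)) ?subr_ge0 ?ltW //.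
  have h2 : (1 - x) * limn (pseries (pseries_diffs bc) x) = s * limn (pseries bc x).
    by rewrite mulrBl mul1r {1}e; ring.
  rewrite /GRing.scale /=.
  set P := (1 - x) `^ (s - 1).
  have -> : (1 - x) * P * limn (pseries (pseries_diffs bc) x) +
     limn (pseries bc x) * (s * P * -1) =
     P * ((1 - x) * limn (pseries (pseries_diffs bc) x) - s * limn (pseries bc x)) by ring.
  by rewrite h2 subrr mulr0.
have := @deriv0_cst R _ hd t (ltac:(apply/andP; split; done) : 0 <= t < 1).
change ((1 - t) `^ s * G t = (1 - 0) `^ s * G 0 -> limn (pseries bc t) = ((1 - t) `^ s)^-1).
rewrite /G pseries0 (@bc0 R s) subr0 powR1 mulr1 => h.
have hp : (1 - t) `^ s != 0 by rewrite gt_eqF // powR_gt0 // subr_gt0.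
by apply: (mulfI hp); rewrite h mulfV.
Qed.
End A5.
Section B1.
Variable R : realType.
Local Open Scope ereal_scope.

Lemma esumZ_nat (k : R) (u : nat -> R) : (0 <= k)%R -> (forall n, (0 <= u n)%R) ->
  \esum_(n in [set: nat]) ((k * u n)%R)%:E = k%:E * \esum_(n in [set: nat]) (u n)%:E.
Proof.
move=> k0 u0.
rewrite -!nneseries_esumT; last 2 first.
- by move=> n; rewrite lee_fin.
- by move=> n; rewrite lee_fin mulr_ge0.
transitivity (\sum_(n <oo) (k%:E * (u n)%:E)).
  by congr (limn _); apply/funext => N; apply: eq_bigr => i _; rewrite EFinM.
by rewrite nneseriesZl // => i _; rewrite lee_fin.
Qed.

Lemma esum_pair (T1 T2 : choiceType) (f : T1 * T2 -> \bar R) : (forall p, 0 <= f p) ->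
  \esum_(p in [set: T1 * T2]) f p = \esum_(i in [set: T1]) \esum_(j in [set: T2]) f (i, j).
Proof.
move=> f0; rewrite (@esum_esum R T1 T2 setT (fun=> setT) (fun i j => f (i, j))) //.
have -> : [set: T1] `*`` (fun=> [set: T2]) = [set: T1 * T2] by apply/seteqP; split.
by apply: eq_esum => -[].
Qed.

Lemma esum_fin_ord (n : nat) (g : 'I_n -> \bar R) : (forall j, 0 <= g j) ->
  \esum_(j in [set: 'I_n]) g j = \sum_(j < n) g j.
Proof.
move=> g0; rewrite esum_fset; last 2 first.
- exact: finite_finset.
- by move=> i _; exact: g0.
rewrite fsbig_finite; last exact: finite_finset.
apply: perm_big; apply: uniq_perm.
- exact: finmap.fset_uniq.
- exact: index_enum_uniq.
- move=> x; rewrite mem_index_enum in_fset_set; last exact: finite_finset.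
  by apply/mem_set.
Qed.

Lemma esum_sumtype (T1 T2 : choiceType) (f : T1 + T2 -> \bar R) : (forall p, 0 <= f p) ->
  \esum_(p in [set: T1 + T2]) f p =
  \esum_(i in [set: T1]) f (inl i) + \esum_(j in [set: T2]) f (inr j).
Proof.
move=> f0; rewrite (esumID (range inl)); last by move=> *; exact: f0.
rewrite setTI.
have -> : [set: T1 + T2] `&` ~` range inl = range inr.
  apply/seteqP; split => -[x|x] //=.
  - by move=> [_ H]; exfalso; apply: H; exists x.
  - by move=> _; exists x.
  - by move=> [y _].
  - by move=> _; split => // -[y _].
rewrite (esum_image setT inl f); last by move=> x y _ _ [].
by rewrite (esum_image setT inr f); last by move=> x y _ _ [].
Qed.

End B1.
Section B2.
Variable R : realType.

Definition ffcons (r : nat) (p : nat * {ffun 'I_r -> nat}) : {ffun 'I_r.+1 -> nat} :=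
  [ffun i => if unlift ord0 i is Some i' then p.2 i' else p.1].

Arguments ffcons {r}.

Lemma ffcons_bij (r : nat) : set_bij [set: nat * {ffun 'I_r -> nat}] [set: {ffun 'I_r.+1 -> nat}] (@ffcons r).
Proof.
split.
- by move=> x.
- move=> [n1 k1] [n2 k2] _ _ /= E.
  have e0 := congr1 (fun k : {ffun 'I_r.+1 -> nat} => k ord0) E.
  rewrite /= !ffunE unlift_none /= in e0.
  congr (_, _) => //; apply/ffunP => i.
  have := congr1 (fun k : {ffun 'I_r.+1 -> nat} => k (lift ord0 i)) E.
  by rewrite /= !ffunE liftK.
- move=> k _; exists (k ord0, [ffun i => k (lift ord0 i)]) => //.
  apply/ffunP => i; rewrite /ffcons ffunE.
  by case: (unliftP ord0 i) => [j ->|->] /=; rewrite ?ffunE.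
Qed.

Local Open Scope ereal_scope.

Lemma esum_prod_ffun (r : nat) (h : 'I_r -> nat -> R) (S : 'I_r -> R) (C : R) :
  (0 <= C)%R -> (forall j n, (0 <= h j n)%R) ->
  (forall j, \esum_(n in [set: nat]) (h j n)%:E = (S j)%:E) ->
  \esum_(k in [set: {ffun 'I_r -> nat}]) ((C * \prod_(j < r) h j (k j))%R)%:E =
  ((C * \prod_(j < r) S j)%R)%:E.
Proof.
elim: r h S C => [|r IH] h S C C0 h0 hS.
  have -> : [set: {ffun 'I_0 -> nat}] = [set [ffun i => 0%N]].
    apply/seteqP; split => k //= _; apply/ffunP => -[] //.
  rewrite esum_set1; last by rewrite lee_fin big_ord0 mulr1.
  by rewrite !big_ord0.
have S0 j : (0 <= S j)%R.
  by rewrite -lee_fin -hS; apply: esum_ge0 => n _; rewrite lee_fin.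
rewrite (reindex_esum _ _ _ _ (@ffcons_bij r)).
rewrite (@esum_pair R nat {ffun 'I_r -> nat}
   (fun p => ((C * \prod_(j < r.+1) h j (ffcons p j))%R)%:E)); last first.
  by move=> p; rewrite lee_fin mulr_ge0 // prodr_ge0.
transitivity (\esum_(n in [set: nat])
   (((C * \prod_(j < r) S (lift ord0 j)) * h ord0 n)%R)%:E).
  apply: eq_esum => n _.
  rewrite (_ : (C * \prod_(j < r) S (lift ord0 j) * h ord0 n)%R =
     (C * h ord0 n * \prod_(j < r) S (lift ord0 j))%R); last by ring.
  rewrite -(IH (fun j => h (lift ord0 j)) (fun j => S (lift ord0 j)) (C * h ord0 n)%R);
    last 3 first.
  - by rewrite mulr_ge0.
  - by move=> j m; exact: h0.
  - by move=> j; exact: hS.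
  apply: eq_esum => k _; congr (_ %:E).
  rewrite big_ord_recl /ffcons ffunE unlift_none /= -mulrA; congr (_ * (_ * _))%R.
  by apply: eq_bigr => i _; rewrite ffunE liftK.
rewrite esumZ_nat; last 2 first.
- by rewrite mulr_ge0 // prodr_ge0.
- by move=> n; exact: h0.
rewrite hS -EFinM big_ord_recl; congr (_ %:E); ring.
Qed.
End B2.
Section B3.
Variable R : realType.
Local Open Scope complex_scope.

Lemma cabs2M (a b : R[i]) : cabs2 (a * b) = cabs2 a * cabs2 b.
Proof. by case: a => a1 a2; case: b => b1 b2; rewrite /cabs2 /=; ring. Qed.

Lemma cabs2X (a : R[i]) n : cabs2 (a ^+ n) = cabs2 a ^+ n.
Proof.
elim: n => [|n IH]; first by rewrite !expr0 /cabs2 /=; ring.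
by rewrite !exprS cabs2M IH.
Qed.

Lemma cabs2_prod (I : Type) (s : seq I) (F : I -> R[i]) :
  cabs2 (\prod_(i <- s) F i) = \prod_(i <- s) cabs2 (F i).
Proof.
elim: s => [|x s IH]; first by rewrite !big_nil /cabs2 /=; ring.
by rewrite !big_cons cabs2M IH.
Qed.

Lemma cabs2C (c : R) : cabs2 (c%:C) = c ^+ 2.
Proof. by rewrite /cabs2 /=; ring. Qed.

Lemma cabs2_ge0 (a : R[i]) : 0 <= cabs2 a.
Proof. by rewrite /cabs2 addr_ge0 // sqr_ge0. Qed.
End B3.
Section B4.
Variable R : realType.
Local Open Scope ereal_scope.

Lemma log_esum (t : R) : (0 <= t < 1)%R ->
  \esum_(m in [set: nat]) ((lc R m.+1 * t ^+ m.+1)%R)%:E = (- ln (1 - t))%:E.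
Proof.
move=> ht.
have [c1 l1] := @log_series R t ht.
have u00 : (lc R 0 * t ^+ 0 = 0)%R by rewrite /lc invr0 mul0r.
have [c2 l2] := @series_shift0 R (fun i => lc R i * t ^+ i)%R u00 c1.
rewrite (@esum_series R (fun m => lc R m.+1 * t ^+ m.+1)%R) //.
- by rewrite l2; congr (_%:E); exact: l1.
- move=> n; rewrite mulr_ge0 // ?exprn_ge0 /lc ?invr_ge0 //.
  by case/andP: ht.
Qed.

Lemma esum_pair_swap (T1 T2 : choiceType) (f : T1 * T2 -> \bar R) : (forall p, 0 <= f p) ->
  \esum_(p in [set: T1 * T2]) f p = \esum_(j in [set: T2]) \esum_(i in [set: T1]) f (i, j).
Proof.
move=> f0.
rewrite (reindex_esum [set: T2 * T1] [set: T1 * T2] (fun p => (p.2, p.1))); last first.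
  split.
  - by move=> p.
  - by move=> [a b] [c d] _ _ /= [-> ->].
  - by move=> [a b] _; exists (b, a).
by rewrite (@esum_pair R T2 T1 (fun p => f (p.2, p.1))).
Qed.

Lemma ln_prod (I : Type) (s : seq I) (F : I -> R) : (forall i, 0 < F i)%R ->
  (0 < \prod_(i <- s) F i)%R /\ ln (\prod_(i <- s) F i) = (\sum_(i <- s) ln (F i))%R.
Proof.
move=> F0; elim: s => [|x s [IH1 IH2]]; first by rewrite !big_nil ln1.
rewrite !big_cons; split; first by rewrite mulr_gt0.
by rewrite lnM ?posrE // IH2.
Qed.

End B4.


End Helpers.
Import Helpers.

Theorem lemma5p1 (R : realType) (r : nat) (mu : R) :
  (1 <= r)%N -> 0 < mu ->
  forall (z : 'I_r -> R[i]) (w : R[i]),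
    in_M mu z w ->
    (\esum_(i in [set: fidx r]%classic) (cabs2 (f_emb mu z w i))%:E)%E =
    (- ln (\prod_(j < r) (1 - cabs2 (z j)) `^ mu - cabs2 w))%:E.
Proof.
move=> _ mu0 z w [hz hw].
have hx0 j : 0 <= cabs2 (z j) by exact: cabs2_ge0.
have hx1 j : 0 < 1 - cabs2 (z j) by rewrite subr_gt0.
have hxx j : 0 <= cabs2 (z j) < 1 by rewrite hx0 hz.
set P := \prod_(j < r) (1 - cabs2 (z j)) `^ mu in hw *.
have hP : 0 < P by apply: prodr_gt0 => j _; exact: powR_gt0.
have hy0 : 0 <= cabs2 w by exact: cabs2_ge0.
set t := cabs2 w / P.
have ht : 0 <= t < 1.
  apply/andP; split; first by apply: divr_ge0 => //; exact: ltW.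
  by rewrite /t ltr_pdivrMr // mul1r.
rewrite esum_sumtype; last by move=> p; rewrite lee_fin cabs2_ge0.
have L : (\esum_(i in [set: 'I_r * nat]%classic) (cabs2 (f_emb mu z w (inl i)))%:E)%E = (- ln P)%:E.
  rewrite esum_pair; last by move=> p; rewrite lee_fin cabs2_ge0.
  have inner j : (\esum_(m in [set: nat]%classic) (cabs2 (f_emb mu z w (inl (j, m))))%:E)%E
      = (mu * - ln (1 - cabs2 (z j)))%:E.
    transitivity (\esum_(m in [set: nat]%classic) ((mu * (lc R m.+1 * cabs2 (z j) ^+ m.+1))%R)%:E)%E.
      apply: eq_esum => m _; congr (_%:E).
      rewrite /f_emb cabs2M cabs2C cabs2X /lc.
      by rewrite exprMn exprVn !sqr_sqrtr ?ler0n ?ltW // mulrA.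
    rewrite esumZ_nat ?ltW //; last first.
      by move=> n; rewrite mulr_ge0 ?exprn_ge0 // /lc invr_ge0.
    by rewrite log_esum // EFinM.
  rewrite (eq_esum (fun j _ => inner j)) esum_fin_ord; last first.
    move=> j; rewrite lee_fin; apply: mulr_ge0; first exact: ltW.
    rewrite oppr_ge0; apply: ln_le0.
    by rewrite lerBlDr lerDl.
  rewrite sumEFin; congr (_%:E).
  have [_ ->] := @ln_prod R 'I_r (index_enum 'I_r) (fun j => (1 - cabs2 (z j)) `^ mu)
    (fun j => powR_gt0 _ (hx1 j)).
  rewrite -sumrN; apply: eq_bigr => j _.
  by rewrite ln_powR mulrN.
have Ps : (\esum_(i in [set: {ffun 'I_r -> nat} * nat]%classic) (cabs2 (f_emb mu z w (inr i)))%:E)%E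
    = (- ln (1 - t))%:E.
  rewrite esum_pair_swap; last by move=> p; rewrite lee_fin cabs2_ge0.
  rewrite -log_esum //; apply: eq_esum => b _.
  pose s := (mu * b.+1%:R)%R.
  have s0 : 0 < s by rewrite /s mulr_gt0.
  transitivity (\esum_(k in [set: {ffun 'I_r -> nat}]%classic)
     (((b.+1%:R^-1 * cabs2 w ^+ b.+1) *
        \prod_(j < r) (bc R s (k j) * cabs2 (z j) ^+ (k j)))%R)%:E)%E.
    apply: eq_esum => k _; congr (_%:E).
    rewrite /f_emb !cabs2M cabs2C cabs2_prod cabs2X.
    have G0 : 0 <= \prod_(j < r) gbinom (mu * b.+1%:R + (k j)%:R - 1) (k j).
      by apply: prodr_ge0 => j _; exact: (@bc_ge0 R s s0).
    rewrite exprMn exprVn !sqr_sqrtr ?ler0n //.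
    have -> : \prod_(i < r) cabs2 (z i ^+ k i) = \prod_(i < r) cabs2 (z i) ^+ k i.
      by apply: eq_bigr => i _; rewrite cabs2X.
    rewrite [in RHS]big_split /= /bc /s; ring.
  rewrite (@esum_prod_ffun R r (fun j n => bc R s n * cabs2 (z j) ^+ n)%R
     (fun j => ((1 - cabs2 (z j)) `^ s)^-1)%R); last 3 first.
  - by rewrite mulr_ge0 ?invr_ge0 ?exprn_ge0.
  - by move=> j n; rewrite mulr_ge0 ?exprn_ge0 // (@bc_ge0 R s s0).
  - move=> j; have [c1 l1] := @binom_series R s s0 _ (hxx j).
    by rewrite (@esum_series R (fun n => bc R s n * cabs2 (z j) ^+ n)%R) //;
      [rewrite -l1|move=> n; rewrite mulr_ge0 ?exprn_ge0 // (@bc_ge0 R s s0)].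
  congr (_%:E).
  rewrite prodfV.
  have -> : \prod_(j < r) (1 - cabs2 (z j)) `^ s = P ^+ b.+1.
    rewrite /P -prodrXl; apply: eq_bigr => j _.
    by rewrite /s powRrM powR_mulrn // powR_ge0.
  by rewrite /lc /t expr_div_n mulrA.
rewrite L Ps -EFinD; congr (_%:E).
have h1 : 0 < 1 - t by case/andP: ht => _; rewrite subr_gt0.
rewrite -opprD -lnM ?posrE //.
congr (- ln _); rewrite /t mulrBr mulr1 mulrCA divff ?mulr1 //.
exact: lt0r_neq0.
Qed.
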